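(* Let $\Lambda<0$, $M>0$, $\ell\ge2$, and on the static region $r>r_h$ of Schwarzschild–anti de Sitter use the tortoise coordinate $r^*=-\int_r^\infty dr'/f(r')\in(-\infty,0)$. Then $$\phi(t,r^* )=\frac{r\,e^{w_\ell(r^*+t)}}{(\ell+2)(\ell-1)r+6M}$$ solves the Zerilli equation $(\partial_t^2-\partial_{r^*}^2+fV^Z_\ell)\phi=0$, belongs to $L^2((-\infty,0),dr^* )$ for every $t$, grows exponentially in $t$, and satisfies the Robin boundary condition $\partial_{r^*}\phi|_{r^*=0}=\tan(\alpha)\,\phi|_{r^*=0}$ with $\tan\alpha=w_\ell-\frac{2M\Lambda}{(\ell-1)(\ell+2)}$. Hence, for the dynamics defined by the self-adjoint extension of $-\partial_{r^*}^2+fV^Z_\ell$ with this boundary condition, the SAdS black hole is linearly unstable.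
   Context: $f=1-\frac{2M}{r}-\frac{\Lambda r^2}{3}$ with single positive root $r_h$; $w_\ell=\frac{1}{12M}\frac{(\ell+2)!}{(\ell-2)!}$; $\mu=(\ell-1)(\ell+2)$; Zerilli potential $V^Z_\ell=\frac{[\mu^2\ell(\ell+1)-24M^2\Lambda]r^3+6\mu^2Mr^2+36\mu M^2r+72M^3}{r^3(6M+\mu r)^2}$. The Robin condition (for $\alpha\in[-\pi,\pi]$) defines a self-adjoint extension of $-\partial_{r^*}^2+fV^Z_\ell$ on $C^\infty_0((-\infty,0))$ in $L^2((-\infty,0),dr^* )$, and the evolution is $\partial_t^2\phi+{}^\alpha\mathcal H\phi=0$ in that domain. *)

(* Defs.v *)
From Stdlib Require Import Reals Lra Factorial.
Open Scope R_scope.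

Definition fSAdS (M Lam r : R) : R := 1 - 2 * M / r - Lam * r ^ 2 / 3.

Definition muL (l : nat) : R := (INR l - 1) * (INR l + 2).

Definition wL (M : R) (l : nat) : R :=
  / (12 * M) * (INR (fact (l + 2)) / INR (fact (l - 2))).

Definition VZ (M Lam : R) (l : nat) (r : R) : R :=
  ((muL l ^ 2 * (INR l * (INR l + 1)) - 24 * M ^ 2 * Lam) * r ^ 3
   + 6 * muL l ^ 2 * M * r ^ 2 + 36 * muL l * M ^ 2 * r + 72 * M ^ 3)
  / (r ^ 3 * (6 * M + muL l * r) ^ 2).

(* The candidate solution, written in terms of t, r* and r = r(rstar). *)
Definition phiZ (M : R) (l : nat) (t rs r : R) : R :=
  r * exp (wL M l * (rs + t)) / ((INR l + 2) * (INR l - 1) * r + 6 * M).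

Definition is_deriv2 (g : R -> R) (x v : R) : Prop :=
  exists g' : R -> R,
    (exists d, 0 < d /\ forall y, Rabs (y - x) < d -> derivable_pt_lim g y (g' y))
    /\ derivable_pt_lim g' x v.

(* Main.v *)
Require Import Defs.
From Stdlib Require Import Reals Lra Lia Factorial Ranalysis5 ClassicalEpsilon FunctionalExtensionality.
From Coquelicot Require Import Coquelicot.
Open Scope R_scope.

Definition mm (l:nat) := (INR l + 2) * (INR l - 1).
Definition Gf M l r := r / (mm l * r + 6*M).
Definition Gd M l r := 6*M / (mm l * r + 6*M)^2.
Definition fd M Lam r := 2*M/r^2 - 2*Lam*r/3.
Definition Gdd M l r := -12*M*mm l/(mm l*r+6*M)^3.
Definition Pf M Lam l r := wL M l * Gf M l r + fSAdS M Lam r * Gd M l r.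
Definition Pd M Lam l r := wL M l * Gd M l r + fd M Lam r * Gd M l r + fSAdS M Lam r * Gdd M l r.

Lemma mm_pos l : (2 <= l)%nat -> 4 <= mm l.
Proof. intros H. apply le_INR in H. unfold mm. simpl in H. nra. Qed.

Lemma wL_eq M l : 0 < M -> (2 <= l)%nat -> wL M l = (INR l+2)*(INR l+1)*INR l*(INR l-1)/(12*M).
Proof. intros HM H. unfold wL.
  replace (l+2)%nat with (S (S (S (S (l-2))))) by lia.
  rewrite !fact_simpl, !mult_INR.
  assert (E: INR (l-2) = INR l - 2) by (rewrite minus_INR by lia; simpl; ring).
  rewrite !S_INR, E.
  assert (0 < INR (fact (l-2))) by (apply lt_0_INR, lt_O_fact).
  field. split; lra. Qed.

Lemma den_pos M l r : 0 < M -> (2<=l)%nat -> 0 < r -> 0 < mm l * r + 6*M.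
Proof. intros. pose proof (mm_pos l H0). nra. Qed.

Lemma dG M l r : 0 < M -> (2<=l)%nat -> 0 < r -> derivable_pt_lim (Gf M l) r (Gd M l r).
Proof. intros HM Hl Hr. pose proof (den_pos M l r HM Hl Hr).
  apply is_derive_Reals. unfold Gf, Gd. auto_derive. lra. field. lra. Qed.

Lemma dF M Lam r : 0 < r -> derivable_pt_lim (fSAdS M Lam) r (fd M Lam r).
Proof. intros Hr. apply is_derive_Reals. unfold fSAdS, fd. auto_derive. lra. field. lra. Qed.

Lemma dGd M l r : 0 < M -> (2<=l)%nat -> 0 < r -> derivable_pt_lim (Gd M l) r (Gdd M l r).
Proof. intros HM Hl Hr. pose proof (den_pos M l r HM Hl Hr).
  apply is_derive_Reals. unfold Gd, Gdd. auto_derive. { intro Hc; nra. } field. lra. Qed.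

Lemma dP M Lam l r : 0 < M -> (2<=l)%nat -> 0 < r -> derivable_pt_lim (Pf M Lam l) r (Pd M Lam l r).
Proof. intros HM Hl Hr. unfold Pf, Pd.
  apply is_derive_Reals.
  replace (wL M l * Gd M l r + fd M Lam r * Gd M l r + fSAdS M Lam r * Gdd M l r) with
    (wL M l * Gd M l r + (fd M Lam r * Gd M l r + fSAdS M Lam r * Gdd M l r)) by ring.
  apply (is_derive_plus (fun r => wL M l * Gf M l r) (fun r => fSAdS M Lam r * Gd M l r)).
  - apply (is_derive_scal (Gf M l)). apply is_derive_Reals, dG; auto.
  - apply (is_derive_mult (fSAdS M Lam) (Gd M l)); try (apply is_derive_Reals; first [apply dF|apply dGd]; auto).
    intros; apply Rmult_comm.
Qed.

Lemma zer_id M Lam l r : 0 < M -> (2<=l)%nat -> 0 < r ->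
  wL M l ^2 * Gf M l r - (Pd M Lam l r * fSAdS M Lam r + wL M l * Pf M Lam l r)
  + fSAdS M Lam r * VZ M Lam l r * Gf M l r = 0.
Proof. intros HM Hl Hr. pose proof (den_pos M l r HM Hl Hr).
  unfold Pd, Pf, Gf, Gd, Gdd, fd, VZ, fSAdS. rewrite (wL_eq M l HM Hl).
  unfold muL, mm in *. field. lra. Qed.

Definition Hyp M Lam rh (rstar : R -> R) :=
  0 < M /\ Lam < 0 /\ 0 < rh /\ fSAdS M Lam rh = 0 /\
  (forall r, rh < r -> derivable_pt_lim rstar r (/ fSAdS M Lam r)) /\
  (forall eps, 0 < eps -> exists A, forall r, A < r -> Rabs (rstar r) < eps).

Lemma f_fact M Lam rh r : 0 < rh -> 0 < r -> fSAdS M Lam rh = 0 ->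
  fSAdS M Lam r = (r - rh) * (2*M/(r*rh) - Lam*(r+rh)/3).
Proof. intros Hrh Hr H0. rewrite <- (Rminus_0_r (fSAdS M Lam r)), <- H0.
  unfold fSAdS. field. lra. Qed.

Lemma f_pos M Lam rh rstar r : Hyp M Lam rh rstar -> rh < r -> 0 < fSAdS M Lam r.
Proof. intros (HM&HL&Hrh&H0&_) Hr. rewrite (f_fact M Lam rh r) by lra.
  apply Rmult_lt_0_compat. lra.
  assert (0 < 2*M/(r*rh)) by (apply Rdiv_lt_0_compat; nra). nra. Qed.

Lemma rstar_incr M Lam rh rstar a b : Hyp M Lam rh rstar -> rh < a -> a < b -> rstar a < rstar b.
Proof. intros H Ha Hab. pose proof H as (HM&HL&Hrh&H0&Hd&_).
  destruct (MVT_cor2 rstar (fun r => / fSAdS M Lam r) a b Hab) as (c&Hc2&Hc).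
  { intros c Hc. apply Hd. lra. }
  assert (0 < / fSAdS M Lam c) by (apply Rinv_0_lt_compat, (f_pos _ _ _ _ _ H); lra).
  nra. Qed.

Lemma rstar_le M Lam rh rstar a b : Hyp M Lam rh rstar -> rh < a -> a <= b -> rstar a <= rstar b.
Proof. intros H Ha Hab. destruct (Req_dec a b). subst; lra.
  left; apply (rstar_incr M Lam rh); auto; lra. Qed.

Lemma rstar_neg M Lam rh rstar r : Hyp M Lam rh rstar -> rh < r -> rstar r < 0.
Proof. intros H Hr. pose proof H as (HM&HL&Hrh&H0&Hd&Hi).
  destruct (Rlt_or_le (rstar r) 0) as [|Hge]; auto.
  pose proof (rstar_incr M Lam rh rstar r (r+1) H Hr ltac:(lra)) as Hi1.
  destruct (Hi (rstar (r+1) - rstar r) ltac:(lra)) as (A & HA).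
  pose (r' := Rmax A (r+1) + 1).
  assert (A < r') by (unfold r'; pose proof (Rmax_l A (r+1)); lra).
  assert (r+1 <= r') by (unfold r'; pose proof (Rmax_r A (r+1)); lra).
  specialize (HA r' H1). pose proof (rstar_le M Lam rh rstar (r+1) r' H ltac:(lra) H2).
  apply Rabs_def2 in HA. lra. Qed.

Lemma rstar_low M Lam rh rstar x : Hyp M Lam rh rstar -> exists r, rh < r /\ rstar r < x.
Proof. intros H. pose proof H as (HM&HL&Hrh&H0&Hd&Hi).
  set (K := 2*M/rh^2 - Lam*(2*rh+1)/3).
  assert (HK : 0 < K). { unfold K. assert (0 < 2*M/rh^2) by (apply Rdiv_lt_0_compat; nra). nra. }
  assert (Hfle : forall c, rh < c <= rh + 1 -> fSAdS M Lam c <= K * (c - rh)).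
  { intros c Hc. rewrite (f_fact M Lam rh c) by lra. rewrite Rmult_comm.
    apply Rmult_le_compat_r. lra. unfold K.
    assert (2*M/(c*rh) <= 2*M/rh^2).
    { unfold Rdiv. apply Rmult_le_compat_l. lra. apply Rinv_le_contravar. nra. nra. }
    nra. }
  set (y := Rmin (x - rstar (rh+1) - 1) (-1)).
  set (r := rh + exp (K*y)).
  assert (Hy1 : y <= -1) by apply Rmin_r.
  assert (Hy2 : y <= x - rstar (rh+1) - 1) by apply Rmin_l.
  assert (He0 : 0 < exp (K*y)) by apply exp_pos.
  assert (He1 : exp (K*y) < 1). { rewrite <- exp_0. apply exp_increasing. nra. }
  exists r. split. unfold r; lra.
  set (h := fun s => rstar s - ln (s - rh) / K).
  assert (Hh : h r <= h (rh+1)).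
  { destruct (MVT_cor2 h (fun s => / fSAdS M Lam s - / (K * (s - rh))) r (rh+1)) as (c&Hc2&Hc).
    - unfold r; lra.
    - intros c Hc. unfold h. apply derivable_pt_lim_minus. apply Hd. unfold r in Hc; lra.
      apply is_derive_Reals. auto_derive. unfold r in Hc; lra. field. split; unfold r in Hc; lra.
    - assert (0 < fSAdS M Lam c) by (apply (f_pos _ _ _ _ _ H); unfold r in Hc; lra).
      assert (fSAdS M Lam c <= K*(c-rh)) by (apply Hfle; unfold r in Hc; lra).
      assert (/ (K*(c-rh)) <= / fSAdS M Lam c) by (apply Rinv_le_contravar; lra).
      assert (0 <= rh + 1 - r) by (unfold r; lra). nra. }
  unfold h in Hh. replace (rh + 1 - rh) with 1 in Hh by ring. rewrite ln_1 in Hh.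
  replace (r - rh) with (exp (K*y)) in Hh by (unfold r; ring). rewrite ln_exp in Hh.
  replace (K*y/K) with y in Hh by (field; lra). lra. Qed.

Lemma rstar_cont M Lam rh rstar r : Hyp M Lam rh rstar -> rh < r -> continuity_pt rstar r.
Proof. intros (HM&HL&Hrh&H0&Hd&Hi) Hr. apply derivable_continuous_pt.
  exists (/ fSAdS M Lam r). apply Hd; auto. Qed.

Lemma rstar_onto M Lam rh rstar x : Hyp M Lam rh rstar -> x < 0 -> exists r, rh < r /\ rstar r = x.
Proof. intros H Hx. pose proof H as (HM&HL&Hrh&H0&Hd&Hi).
  destruct (rstar_low M Lam rh rstar x H) as (r1&Hr1&Hr1x).
  destruct (Hi (-x) ltac:(lra)) as (A&HA).
  set (r2 := Rmax A r1 + 1).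
  assert (A < r2) by (unfold r2; pose proof (Rmax_l A r1); lra).
  assert (r1 < r2) by (unfold r2; pose proof (Rmax_r A r1); lra).
  specialize (HA r2 H1). apply Rabs_def2 in HA.
  destruct (f_interv_is_interv rstar r1 r2 x H2) as (r&Hr&Hrx).
  - lra.
  - intros; apply (rstar_cont M Lam rh); auto; lra.
  - exists r; split; auto; lra. Qed.

Lemma rr_ex M Lam rh rstar : Hyp M Lam rh rstar ->
  { rr : R -> R | forall x, x < 0 -> rh < rr x /\ rstar (rr x) = x }.
Proof. intros H.
  assert (forall x, exists r, x < 0 -> rh < r /\ rstar r = x).
  { intros x. destruct (Rlt_or_le x 0) as [Hx|Hx].
    - destruct (rstar_onto M Lam rh rstar x H Hx) as (r&Hr). exists r; auto.
    - exists 0; intros; lra. }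
  exists (fun x => proj1_sig (constructive_indefinite_description _ (H0 x))).
  intros x. exact (proj2_sig (constructive_indefinite_description _ (H0 x))). Qed.

Lemma rstar_inj M Lam rh rstar a b : Hyp M Lam rh rstar -> rh < a -> rh < b -> rstar a = rstar b -> a = b.
Proof. intros H Ha Hb E. destruct (Rtotal_order a b) as [h|[h|h]]; auto.
  pose proof (rstar_incr M Lam rh rstar a b H Ha h); lra.
  pose proof (rstar_incr M Lam rh rstar b a H Hb h); lra. Qed.

Lemma rr_gt M Lam rh rstar rr x r : Hyp M Lam rh rstar ->
  (forall x, x < 0 -> rh < rr x /\ rstar (rr x) = x) -> x < 0 -> rh < r -> rstar r < x -> r < rr x.
Proof. intros H Hrr Hx Hr Hlt. destruct (Hrr x Hx) as (A&B).
  destruct (Rlt_or_le r (rr x)) as [|Hle]; auto.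
  pose proof (rstar_le M Lam rh rstar (rr x) r H A Hle). lra. Qed.

Lemma rr_lt M Lam rh rstar rr x r : Hyp M Lam rh rstar ->
  (forall x, x < 0 -> rh < rr x /\ rstar (rr x) = x) -> x < 0 -> rh < r -> x < rstar r -> rr x < r.
Proof. intros H Hrr Hx Hr Hlt. destruct (Hrr x Hx) as (A&B).
  destruct (Rlt_or_le (rr x) r) as [|Hle]; auto.
  pose proof (rstar_le M Lam rh rstar r (rr x) H Hr Hle). lra. Qed.

Lemma rr_deriv M Lam rh rstar rr x : Hyp M Lam rh rstar ->
  (forall x, x < 0 -> rh < rr x /\ rstar (rr x) = x) -> x < 0 ->
  derivable_pt_lim rr x (fSAdS M Lam (rr x)).
Proof. intros H Hrr Hx. pose proof H as (HM&HL&Hrh&H0&Hd&Hi).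
  destruct (Hrr x Hx) as (Hr0&Hr0x).
  set (r0 := rr x) in *.
  set (r1 := (rh + r0)/2). set (r2 := r0 + 1).
  assert (H1 : rh < r1) by (unfold r1; lra).
  assert (H12 : r1 < r2) by (unfold r1, r2; lra).
  assert (Hs1 : rstar r1 < x) by (rewrite <- Hr0x; apply (rstar_incr M Lam rh); [exact H| |]; unfold r1; lra).
  assert (Hs2 : x < rstar r2) by (rewrite <- Hr0x; apply (rstar_incr M Lam rh); [exact H| |]; unfold r2; lra).
  assert (Hs2n : rstar r2 < 0) by (apply (rstar_neg M Lam rh); auto; lra).
  assert (Hg1 : rr (rstar r1) = r1).
  { destruct (Hrr (rstar r1) ltac:(lra)) as (a&b). apply (rstar_inj M Lam rh rstar); auto. }
  assert (Hg2 : rr (rstar r2) = r2).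
  { destruct (Hrr (rstar r2) ltac:(lra)) as (a&b). apply (rstar_inj M Lam rh rstar); auto; lra. }
  assert (Hwf : forall y, rstar r1 <= y <= rstar r2 -> r1 <= rr y <= r2).
  { intros y Hy. destruct (Hrr y ltac:(lra)) as (a&b). split.
    - destruct (Rlt_or_le (rr y) r1) as [h|h]; auto.
      pose proof (rstar_incr M Lam rh rstar (rr y) r1 H a h). lra.
    - destruct (Rlt_or_le r2 (rr y)) as [h|h]; auto.
      pose proof (rstar_incr M Lam rh rstar r2 (rr y) H ltac:(lra) h). lra. }
  assert (Hcont : continuity_pt rr x).
  { apply (continuity_pt_recip_interv rstar rr r1 r2 H12).
    - intros a b ha hab hb. apply (rstar_incr M Lam rh); auto; lra.
    - intros y hy1 hy2. unfold comp, id. apply Hrr. lra.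
    - intros y hy1 hy2. apply Hwf; lra.
    - intros a ha. apply (rstar_cont M Lam rh); auto; lra.
    - lra. }
  assert (Prf : forall a, rr (rstar r1) <= a <= rr (rstar r2) -> derivable_pt rstar a).
  { intros a ha. rewrite Hg1 in ha. exists (/ fSAdS M Lam a). apply Hd. lra. }
  assert (Pinc : rr (rstar r1) <= rr x <= rr (rstar r2)) by (rewrite Hg1, Hg2; fold r0; unfold r1, r2; lra).
  assert (Hdp : derive_pt rstar (rr x) (Prf (rr x) Pinc) = / fSAdS M Lam (rr x)).
  { apply derive_pt_eq_0. apply Hd. auto. }
  assert (Hfp : 0 < fSAdS M Lam (rr x)) by (apply (f_pos M Lam rh rstar); auto).
  pose proof (derivable_pt_lim_recip_interv rstar rr (rstar r1) (rstar r2) x Prf Hcont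
    ltac:(lra) ltac:(lra) Pinc) as D.
  rewrite Hdp in D. unfold r0. replace (fSAdS M Lam (rr x)) with (1 / / fSAdS M Lam (rr x)) by (field; lra).
  apply D.
  - intros y hy. unfold comp, id. apply Hrr. lra.
  - apply Rgt_not_eq, Rlt_gt, Rinv_0_lt_compat; auto.
Qed.

Lemma comp_cont (q B : R -> R) (D : R -> Prop) :
  limit1_in q D 0 0 -> continuity_pt B 0 -> limit1_in (fun x => B (q x)) D (B 0) 0.
Proof. intros Hq HB eps Heps.
  destruct (HB eps Heps) as (a&Ha&HBa).
  destruct (Hq a Ha) as (b&Hb&Hqb).
  exists b; split; auto. intros x (Dx&Hx).
  destruct (Req_dec (q x) 0) as [E|E].
  - rewrite E. simpl. unfold R_dist. rewrite Rminus_diag, Rabs_R0. lra.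
  - apply HBa. split. split. exact I. auto. apply Hqb. auto. Qed.

Lemma lim_id (D : R -> Prop) : limit1_in (fun x => x) D 0 0.
Proof. intros eps Heps. exists eps; split; auto. intros x (_&H); auto. Qed.

Lemma phiZ_eq M l t x r : phiZ M l t x r = Gf M l r * exp (wL M l * (x + t)).
Proof. unfold phiZ, Gf, mm, Rdiv. ring. Qed.

Definition Af M l u := 1 / (mm l + 6*M*u).
Definition Bf M Lam l u := wL M l * Af M l u + (u^2 - 2*M*u^3 - Lam/3) * (6*M) / (mm l + 6*M*u)^2.

Lemma Gf_A M l r : 0 < M -> (2<=l)%nat -> 0 < r -> Gf M l r = Af M l (/ r).
Proof. intros HM Hl Hr. pose proof (den_pos M l r HM Hl Hr). unfold Gf, Af.
  assert (mm l + 6*M*/r <> 0).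
  { replace (mm l * r + 6*M) with (r * (mm l + 6*M*/r)) in H by (field; lra).
    intro Hc. rewrite Hc in H. lra. }
  field. repeat split; try lra; auto. Qed.

Lemma Pf_B M Lam l r : 0 < M -> (2<=l)%nat -> 0 < r -> Pf M Lam l r = Bf M Lam l (/ r).
Proof. intros HM Hl Hr. pose proof (den_pos M l r HM Hl Hr). unfold Pf, Bf.
  rewrite Gf_A by auto. f_equal. unfold Gd, fSAdS.
  assert (mm l + 6*M*/r <> 0).
  { replace (mm l * r + 6*M) with (r * (mm l + 6*M*/r)) in H by (field; lra).
    intro Hc. rewrite Hc in H. lra. }
  field. lra. Qed.

Lemma A_cont M l : 0 < M -> (2<=l)%nat -> continuity_pt (Af M l) 0.
Proof. intros HM Hl. pose proof (mm_pos l Hl). apply derivable_continuous_pt.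
  apply ex_derive_Reals_0. unfold Af. auto_derive. lra. Qed.

Lemma B_cont M Lam l : 0 < M -> (2<=l)%nat -> continuity_pt (Bf M Lam l) 0.
Proof. intros HM Hl. pose proof (mm_pos l Hl). apply derivable_continuous_pt.
  apply ex_derive_Reals_0. unfold Bf, Af. auto_derive. split. lra. split. intro Hc; nra. auto. Qed.

Lemma exp_cont w t : continuity_pt (fun x => exp (w * (x + t))) 0.
Proof. apply derivable_continuous_pt. apply ex_derive_Reals_0. auto_derive. auto. Qed.

Lemma q_lim M Lam rh rstar rr : Hyp M Lam rh rstar ->
  (forall x, x < 0 -> rh < rr x /\ rstar (rr x) = x) ->
  limit1_in (fun x => / rr x) (fun x => x < 0) 0 0.
Proof. intros H Hrr eps Heps. pose proof H as (HM&HL&Hrh&H0&Hd&Hi).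
  set (R0 := Rmax rh (/eps) + 1).
  assert (HR0 : rh < R0) by (unfold R0; pose proof (Rmax_l rh (/eps)); lra).
  assert (HR0' : /eps < R0) by (unfold R0; pose proof (Rmax_r rh (/eps)); lra).
  pose proof (rstar_neg M Lam rh rstar R0 H HR0).
  exists (- rstar R0). split. lra.
  intros x (Hx&Hd2). simpl in Hd2. unfold R_dist in *. rewrite Rminus_0_r in *.
  rewrite Rabs_left in Hd2 by lra.
  assert (R0 < rr x) by (apply (rr_gt M Lam rh rstar); auto; lra).
  simpl. unfold R_dist. rewrite Rminus_0_r.
  assert (0 < /eps) by (apply Rinv_0_lt_compat; lra).
  rewrite Rabs_right by (left; apply Rinv_0_lt_compat; lra).
  replace eps with (/ / eps) by (field; lra).
  apply Rinv_lt_contravar. nra. lra. Qed.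

Lemma lim_ext (f g : R -> R) D l x0 : (forall x, D x -> f x = g x) ->
  limit1_in g D l x0 -> limit1_in f D l x0.
Proof. intros E Hg eps Heps. destruct (Hg eps Heps) as (a&Ha&Hb).
  exists a; split; auto. intros x (Dx&Hx). rewrite E by auto. apply Hb; auto. Qed.

Lemma dphi1 M Lam l rh rstar rr t x : Hyp M Lam rh rstar -> (2<=l)%nat ->
  (forall x, x < 0 -> rh < rr x /\ rstar (rr x) = x) -> x < 0 ->
  derivable_pt_lim (fun y => phiZ M l t y (rr y)) x (Pf M Lam l (rr x) * exp (wL M l * (x + t))).
Proof. intros H Hl Hrr Hx. pose proof H as (HM&HL&Hrh&H0&Hd&Hi).
  destruct (Hrr x Hx) as (Hr&_).
  pose proof (den_pos M l (rr x) HM Hl ltac:(lra)).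
  pose proof (rr_deriv M Lam rh rstar rr x H Hrr Hx) as Dr.
  apply is_derive_Reals in Dr.
  apply is_derive_Reals.
  replace (fun y => phiZ M l t y (rr y)) with (fun y => Gf M l (rr y) * exp (wL M l * (y + t)))
    by (apply functional_extensionality; intros; rewrite phiZ_eq; auto).
  unfold Gf. auto_derive.
  - repeat split; try lra; try (eexists; exact Dr).
  - replace (Derive (fun x0 => rr x0) x) with (fSAdS M Lam (rr x))
      by (symmetry; apply is_derive_unique; exact Dr).
    unfold Pf, Gf, Gd. field. lra. Qed.

Lemma dphi2 M Lam l rh rstar rr t x : Hyp M Lam rh rstar -> (2<=l)%nat ->
  (forall x, x < 0 -> rh < rr x /\ rstar (rr x) = x) -> x < 0 ->
  derivable_pt_lim (fun y => Pf M Lam l (rr y) * exp (wL M l * (y + t))) x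
    ((Pd M Lam l (rr x) * fSAdS M Lam (rr x) + wL M l * Pf M Lam l (rr x)) * exp (wL M l * (x + t))).
Proof. intros H Hl Hrr Hx. pose proof H as (HM&HL&Hrh&H0&Hd&Hi).
  destruct (Hrr x Hx) as (Hr&_).
  pose proof (den_pos M l (rr x) HM Hl ltac:(lra)).
  pose proof (rr_deriv M Lam rh rstar rr x H Hrr Hx) as Dr.
  apply is_derive_Reals in Dr.
  apply is_derive_Reals.
  unfold Pf, Gf, Gd, fSAdS. auto_derive.
  - repeat split; try lra; try (eexists; exact Dr); intro Hc; nra.
  - replace (Derive (fun x0 => rr x0) x) with (fSAdS M Lam (rr x))
      by (symmetry; apply is_derive_unique; exact Dr).
    unfold Pd, Gf, Gd, Gdd, fd, fSAdS. field. lra. Qed.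

Lemma wL_pos M l : 0 < M -> (2<=l)%nat -> 0 < wL M l.
Proof. intros HM Hl. rewrite wL_eq by auto. apply le_INR in Hl. simpl in Hl.
  apply Rdiv_lt_0_compat; [|lra].
  repeat apply Rmult_lt_0_compat; lra. Qed.

Lemma Gf_bnd M l r : 0 < M -> (2<=l)%nat -> 0 < r -> 0 < Gf M l r <= 1 / mm l.
Proof. intros HM Hl Hr. pose proof (den_pos M l r HM Hl Hr). pose proof (mm_pos l Hl).
  split. unfold Gf; apply Rdiv_lt_0_compat; lra.
  assert (1/mm l - Gf M l r = 6*M/(mm l * (mm l * r + 6*M))) by (unfold Gf; field; lra).
  assert (0 < 6*M/(mm l * (mm l * r + 6*M))) by (apply Rdiv_lt_0_compat; nra). lra. Qed.

Theorem mainTheorem10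
  (M Lam rh : R) (l : nat) (rstar : R -> R)
  (HLam : Lam < 0) (HM : 0 < M) (Hl : (2 <= l)%nat)
  (Hrh : 0 < rh) (Hfrh : fSAdS M Lam rh = 0)
  (Hrh_uniq : forall r, 0 < r -> fSAdS M Lam r = 0 -> r = rh)
  (Hrs_deriv : forall r, rh < r -> derivable_pt_lim rstar r (/ fSAdS M Lam r))
  (Hrs_inf : forall eps, 0 < eps -> exists A, forall r, A < r -> Rabs (rstar r) < eps) :
  exists rr : R -> R,
    (forall x, x < 0 -> rh < rr x /\ rstar (rr x) = x) /\
    let phi := fun t x => phiZ M l t x (rr x) in
    (forall t x, x < 0 ->
       exists a b,
         is_deriv2 (fun s => phi s x) t a /\
         is_deriv2 (fun y => phi t y) x b /\
         a - b + fSAdS M Lam (rr x) * VZ M Lam l (rr x) * phi t x = 0) /\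
    (forall t,
       (forall a b, a <= b < 0 -> inhabited (Riemann_integrable (fun x => (phi t x) ^ 2) a b)) /\
       exists C, forall a b (pr : Riemann_integrable (fun x => (phi t x) ^ 2) a b),
         a <= b < 0 -> RiemannInt pr <= C) /\
    (exists kappa, 0 < kappa /\
       (forall t x, x < 0 -> phi t x = exp (kappa * t) * phi 0 x) /\
       exists x0, x0 < 0 /\ phi 0 x0 <> 0) /\
    (exists alpha, - PI <= alpha <= PI /\
       tan alpha = wL M l - 2 * M * Lam / muL l /\
       forall t, exists (dphi : R -> R) (L0 L1 : R),
         (forall x, x < 0 -> derivable_pt_lim (fun y => phi t y) x (dphi x)) /\
         limit1_in (fun x => phi t x) (fun x => x < 0) L0 0 /\
         limit1_in dphi (fun x => x < 0) L1 0 /\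
         L1 = tan alpha * L0).
Proof.
  assert (H : Hyp M Lam rh rstar) by (repeat split; auto).
  destruct (rr_ex M Lam rh rstar H) as (rr & Hrr).
  exists rr. split; [exact Hrr|]. intros phi. unfold phi.
  pose proof (wL_pos M l HM Hl) as Hw. pose proof (mm_pos l Hl) as Hm.
  set (w := wL M l) in *. set (m := mm l) in *.
  split; [|split; [|split]].
  -
    intros t x Hx. destruct (Hrr x Hx) as (Hr&_).
    exists (w^2 * phiZ M l t x (rr x)),
      ((Pd M Lam l (rr x) * fSAdS M Lam (rr x) + w * Pf M Lam l (rr x)) * exp (w * (x + t))).
    assert (Dt : forall s, derivable_pt_lim (fun s => phiZ M l s x (rr x)) s (w * phiZ M l s x (rr x))).
    { intros s. apply is_derive_Reals.
      replace (fun s => phiZ M l s x (rr x)) with (fun s => Gf M l (rr x) * exp (w * (x + s)))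
        by (apply functional_extensionality; intros; rewrite phiZ_eq; auto).
      rewrite phiZ_eq. auto_derive. auto. fold w. ring. }
    split; [|split].
    + exists (fun s => w * phiZ M l s x (rr x)). split.
      * exists 1. split. lra. intros y _. apply Dt.
      * apply is_derive_Reals. replace (w^2 * phiZ M l t x (rr x)) with (w * (w * phiZ M l t x (rr x))) by ring.
        apply (is_derive_scal (fun s => phiZ M l s x (rr x))). apply is_derive_Reals, Dt.
    + exists (fun y => Pf M Lam l (rr y) * exp (w * (y + t))). split.
      * exists (-x). split. lra. intros y Hy. apply Rabs_def2 in Hy.
        apply (dphi1 M Lam l rh rstar rr t y H Hl Hrr). lra.
      * apply (dphi2 M Lam l rh rstar rr t x H Hl Hrr Hx).
    + rewrite phiZ_eq. fold w. pose proof (zer_id M Lam l (rr x) HM Hl ltac:(lra)) as Z. fold w in Z.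
      transitivity (exp (w * (x + t)) * (w ^ 2 * Gf M l (rr x) -
        (Pd M Lam l (rr x) * fSAdS M Lam (rr x) + w * Pf M Lam l (rr x)) +
        fSAdS M Lam (rr x) * VZ M Lam l (rr x) * Gf M l (rr x))). ring.
      rewrite Z. ring.
  -
    intros t.
    assert (Cphi : forall y, y < 0 -> continuity_pt (fun x => phiZ M l t x (rr x) ^ 2) y).
    { intros y Hy. apply derivable_continuous_pt. apply ex_derive_Reals_0.
      apply (ex_derive_comp (fun u => u^2) (fun x => phiZ M l t x (rr x))).
      - auto_derive. auto.
      - eexists. apply is_derive_Reals. apply (dphi1 M Lam l rh rstar rr t y H Hl Hrr Hy). }
    split.
    + intros a b Hab. constructor. apply continuity_implies_RiemannInt. lra.
      intros; apply Cphi; lra.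
    + exists (exp (2 * w * t) / (2 * w * m^2)). intros a b pr (Hab&Hb).
      set (g := fun x => exp (2 * w * (x + t)) / m^2).
      set (F := fun x => exp (2 * w * (x + t)) / (2 * w * m^2)).
      assert (Hm2 : 0 < 2 * w * m^2) by (assert (0 < m^2) by (apply pow_lt; lra); nra).
      assert (Cg : forall y, continuity_pt g y).
      { intros y. apply derivable_continuous_pt. apply ex_derive_Reals_0. unfold g. auto_derive. lra. }
      assert (pr2 : Riemann_integrable g a b) by (apply continuity_implies_RiemannInt; auto).
      apply Rle_trans with (RiemannInt pr2).
      * apply RiemannInt_P19; auto. intros x Hx.
        destruct (Hrr x ltac:(lra)) as (Hr&_).
        pose proof (Gf_bnd M l (rr x) HM Hl ltac:(lra)) as (G1&G2). fold m in G2.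
        rewrite phiZ_eq. fold w. unfold g.
        replace (exp (2 * w * (x + t))) with (exp (w * (x + t)) ^ 2)
          by (simpl; rewrite Rmult_1_r, <- exp_plus; f_equal; ring).
        pose proof (exp_pos (w * (x + t))).
        replace (exp (w * (x + t)) ^ 2 / m ^ 2) with ((1/m) ^ 2 * exp (w * (x + t)) ^ 2) by (field; lra).
        rewrite Rpow_mult_distr. apply Rmult_le_compat_r. apply pow2_ge_0.
        apply pow_incr. lra.
      * rewrite <- (RInt_Reals g a b pr2).
        assert (IR : is_RInt g a b (F b - F a)).
        { apply (is_RInt_derive F g). intros x _. unfold F, g. auto_derive. auto. field. lra.
          intros x _. apply continuity_pt_filterlim. apply Cg. }
        rewrite (is_RInt_unique _ _ _ _ IR).
        assert (0 < F a) by (unfold F; apply Rdiv_lt_0_compat; [apply exp_pos| lra]).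
        assert (F b <= F 0).
        { unfold F. unfold Rdiv. apply Rmult_le_compat_r. left; apply Rinv_0_lt_compat; lra.
          destruct (Req_dec b 0). subst; lra. left. apply exp_increasing. nra. }
        unfold F in *. replace (0 + t) with t in H1 by ring. lra.
  -
    exists w. split; auto. split.
    + intros t x Hx. rewrite !phiZ_eq. fold w.
      replace (w * (x + t)) with (w * t + w * (x + 0)) by ring. rewrite exp_plus. ring.
    + exists (-1). split. lra. rewrite phiZ_eq.
      destruct (Hrr (-1) ltac:(lra)) as (Hr&_).
      pose proof (Gf_bnd M l (rr (-1)) HM Hl ltac:(lra)) as (G1&G2).
      pose proof (exp_pos (wL M l * (-1 + 0))). apply Rgt_not_eq. apply Rmult_lt_0_compat; lra.
  -
    exists (atan (wL M l - 2 * M * Lam / muL l)).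
    pose proof (atan_bound (wL M l - 2 * M * Lam / muL l)). pose proof PI_RGT_0.
    split. lra. split. apply tan_atan.
    intros t. rewrite tan_atan.
    exists (fun x => Bf M Lam l (/ rr x) * exp (w * (x + t))),
      (Af M l 0 * exp (w * (0 + t))), (Bf M Lam l 0 * exp (w * (0 + t))).
    split; [|split; [|split]].
    + intros x Hx. destruct (Hrr x Hx) as (Hr&_). rewrite <- Pf_B by (auto; lra).
      apply (dphi1 M Lam l rh rstar rr t x H Hl Hrr Hx).
    + apply (lim_ext _ (fun x => Af M l (/ rr x) * exp (w * (x + t)))).
      { intros x Hx. destruct (Hrr x Hx) as (Hr&_). rewrite phiZ_eq, Gf_A by (auto; lra). auto. }
      apply limit_mul.
      * apply (comp_cont (fun x => / rr x)). apply (q_lim M Lam rh rstar); auto. apply A_cont; auto.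
      * apply (comp_cont (fun x => x) (fun x => exp (w * (x + t)))). apply lim_id. apply exp_cont.
    + apply limit_mul.
      * apply (comp_cont (fun x => / rr x)). apply (q_lim M Lam rh rstar); auto. apply B_cont; auto.
      * apply (comp_cont (fun x => x) (fun x => exp (w * (x + t)))). apply lim_id. apply exp_cont.
    + unfold Bf, Af, muL. fold w. fold (mm l). fold m.
      replace ((INR l - 1) * (INR l + 2)) with m by (unfold m, mm; ring).
      field. lra.
Qed.
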